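(* Let $f(q):=\sum_{n=0}^{\infty}\frac{q^{n^2}}{(-q;q)_n^2}$. Then the series defining $f(q)$ converges for every $q\in\mathbb{C}$ with $|q|\neq 1$. Moreover, if $0<|q|<1$ and $\chi(q):=(-q;q)_\infty$, then $$f(q)=\sum_{n=0}^{\infty}\frac{q^{n^2}}{(-q;q)_n^2},\qquad f(1/q)=\sum_{n=0}^{\infty}\frac{q^{n}}{(-q;q)_n^2},$$ $$f(q)=\chi(q)^{-2}\sum_{n=0}^{\infty}\left(-q^{n+1};q\right)_\infty^2q^{n^2},\qquad f(1/q)=\chi(q)^{-2}\sum_{n=0}^{\infty}\left(-q^{n+1};q\right)_\infty^2q^{n},$$ $$f(q)=\chi(q)^{-2}\sum_{n=0}^{\infty}q^{n^2}\exp\left[-2\sum_{s=1}^{\infty}\frac{q^s}{s}\sum_{d\mid s,\ d\geq n+1}(-1)^{s/d}d\right],$$ $$f(q)\chi(q)^2=\sum_{n=0}^{\infty}q^{n^2}\exp\left[-2\sum_{s=1}^{\infty}q^s\sum_{0<d\mid s,\ d\leq s/(n+1)}\frac{(-1)^d}{d}\right],$$ $$f(1/q)\chi(q)^2=\sum_{n=0}^{\infty}q^{n}\exp\left[-2\sum_{s=1}^{\infty}q^s\sum_{0<d\mid s,\ d\leq s/(n+1)}\frac{(-1)^d}{d}\right].$$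
   Context: The $q$-Pochhammer symbol is $(a;q)_n:=\prod_{j=1}^{n}(1-aq^{j-1})$ for $n\geq1$, $(a;q)_0:=1$, and $(a;q)_\infty:=\prod_{j=1}^\infty(1-aq^{j-1})$ for $|q|<1$. Divisors $d$ in the inner sums are positive integers. *)

(* Defs.v *)
From Stdlib Require Export Reals Arith.
From Coquelicot Require Export Coquelicot.
Open Scope C_scope.

Definition cpow (z : C) (n : nat) : C := pow_n z n.

Fixpoint qpoch (a q : C) (n : nat) : C :=
  match n with
  | O => 1
  | S m => qpoch a q m * (1 - a * cpow q m)
  end.

Definition CLim (u : nat -> C) : C :=
  (real (Lim_seq (fun n => Re (u n))), real (Lim_seq (fun n => Im (u n)))).
Definition CSeries (a : nat -> C) : C := CLim (sum_n a).

Definition qpoch_inf (a q : C) : C := CLim (qpoch a q).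

Definition cexp (z : C) : C := CSeries (fun k => cpow z k / RtoC (INR (fact k))).

Definition f_term (q : C) (n : nat) : C := cpow q (n * n)%nat / (qpoch (- q) q n * qpoch (- q) q n).
Definition fser (q : C) : C := CSeries (f_term q).

Definition chi (q : C) : C := qpoch_inf (- q) q.

Definition divsum (s : nat) (P : nat -> bool) (g : nat -> R) : R :=
  sum_n (fun d => if andb (andb (Nat.ltb 0 d) (Nat.eqb (s mod d) 0)) (P d) then g d else 0%R) s.

Definition A1 (n s : nat) : R :=
  divsum s (fun d => Nat.leb (S n)%nat d) (fun d => ((-1) ^ (s / d) * INR d)%R).

(* sum_{0 < d | s, d <= s/(n+1)} (-1)^d / d   (condition d*(n+1) <= s) *)
Definition A2 (n s : nat) : R :=
  divsum s (fun d => Nat.leb (d * S n) s) (fun d => ((-1) ^ d / INR d)%R).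

(* Main.v *)
Require Import Defs.
From Stdlib Require Import Lra Lia FunctionalExtensionality.
Open Scope C_scope.

Lemma Re_sum_n (a : nat -> C) n : fst (sum_n a n) = sum_n (fun k => fst (a k)) n.
Proof.
  induction n; [rewrite !sum_O; reflexivity|].
  rewrite !sum_Sn, <- IHn. reflexivity.
Qed.
Lemma Im_sum_n (a : nat -> C) n : snd (sum_n a n) = sum_n (fun k => snd (a k)) n.
Proof.
  induction n; [rewrite !sum_O; reflexivity|].
  rewrite !sum_Sn, <- IHn. reflexivity.
Qed.

Lemma CSeries_eq (a : nat -> C) :
  CSeries a = (Series (fun k => fst (a k)), Series (fun k => snd (a k))).
Proof.
  unfold CSeries, CLim, Series. f_equal; f_equal; apply Lim_seq_ext; intro n.
  apply Re_sum_n. apply Im_sum_n.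
Qed.

Lemma Clim_iff (u : nat -> C) (l : C) :
  filterlim u eventually (locally l) <->
  filterlim (fun n => fst (u n)) eventually (locally (fst l)) /\
  filterlim (fun n => snd (u n)) eventually (locally (snd l)).
Proof.
  split.
  - intro H. split; apply filterlim_locally; intro eps;
    generalize (proj1 (filterlim_locally _ _) H eps); apply filter_imp;
    intros x [H1 H2]; assumption.
  - intros [H1 H2]. apply filterlim_locally; intro eps.
    generalize (proj1 (filterlim_locally _ _) H1 eps) (proj1 (filterlim_locally _ _) H2 eps).
    intros A B. generalize (filter_and _ _ A B). apply filter_imp. intros x [C D]. split; assumption.
Qed.

Lemma CLim_correct (u : nat -> C) l : filterlim u eventually (locally l) -> CLim u = l.
Proof.
  intro H. apply Clim_iff in H as [H1 H2]. unfold CLim. unfold Re, Im.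
  rewrite (is_lim_seq_unique _ (fst l) H1), (is_lim_seq_unique _ (snd l) H2).
  destruct l; reflexivity.
Qed.

Lemma CSeries_correct (a : nat -> C) l : is_series a l -> CSeries a = l.
Proof. apply CLim_correct. Qed.

Lemma CSeries_ex (a : nat -> C) : ex_series a -> is_series a (CSeries a).
Proof. intros [l H]. rewrite (CSeries_correct _ _ H). exact H. Qed.
Open Scope R_scope.

Definition CD (f : R -> C) (x : R) (l : C) :=
  derivable_pt_lim (fun t => fst (f t)) x (fst l) /\
  derivable_pt_lim (fun t => snd (f t)) x (snd l).

Lemma dpl_eq f x l l' : derivable_pt_lim f x l -> l = l' -> derivable_pt_lim f x l'.
Proof. intros H <-; exact H. Qed.

Lemma CD_ext f g x l : (forall t, f t = g t) -> CD f x l -> CD g x l.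
Proof. intros H. replace g with f; [auto|]. apply functional_extensionality; auto. Qed.

Lemma CD_mult f g x df dg : CD f x df -> CD g x dg ->
  CD (fun t => (f t * g t)%C) x (df * g x + f x * dg)%C.
Proof.
  intros [F1 F2] [G1 G2]. split; simpl.
  - pose proof (derivable_pt_lim_minus _ _ _ _ _ (derivable_pt_lim_mult _ _ _ _ _ F1 G1)
       (derivable_pt_lim_mult _ _ _ _ _ F2 G2)) as K.
    unfold minus_fct, mult_fct in K. eapply dpl_eq; [exact K| ring].
  - pose proof (derivable_pt_lim_plus _ _ _ _ _ (derivable_pt_lim_mult _ _ _ _ _ F1 G2)
       (derivable_pt_lim_mult _ _ _ _ _ F2 G1)) as K.
    unfold plus_fct, mult_fct in K. eapply dpl_eq; [exact K| ring].
Qed.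

Lemma CD_const (c : C) x : CD (fun _ => c) x 0%C.
Proof. split; apply derivable_pt_lim_const. Qed.

Lemma dpl_affine (a b x : R) : derivable_pt_lim (fun t => a + t * b) x b.
Proof.
  pose proof (derivable_pt_lim_plus _ _ _ _ _ (derivable_pt_lim_const a x)
     (derivable_pt_lim_mult _ _ _ _ _ (derivable_pt_lim_id x) (derivable_pt_lim_const b x))) as K.
  unfold plus_fct, mult_fct, id, fct_cte in K. eapply dpl_eq; [exact K| ring].
Qed.

Lemma CD_lin (a b : C) x : CD (fun t => (a + RtoC t * b)%C) x b.
Proof.
  split; simpl.
  - eapply dpl_eq. eapply (derivable_pt_lim_ext (fun t => fst a + t * (fst b)) ). 2: apply dpl_affine.
    intro; simpl; ring. reflexivity.
  - eapply dpl_eq. eapply (derivable_pt_lim_ext (fun t => snd a + t * (snd b)) ). 2: apply dpl_affine.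
    intro; simpl; ring. reflexivity.
Qed.

Lemma CD_opp f x l : CD f x l -> CD (fun t => (- f t)%C) x (- l)%C.
Proof.
  intros [F1 F2]; split; simpl.
  pose proof (derivable_pt_lim_opp _ _ _ F1) as K; unfold opp_fct in K; exact K.
  pose proof (derivable_pt_lim_opp _ _ _ F2) as K; unfold opp_fct in K; exact K.
Qed.

Lemma CD_zero f a b : (forall t, a <= t <= b -> CD f t 0%C) -> (a < b)%R -> f a = f b.
Proof.
  intros H Hab.
  assert (E1 : fst (f a) = fst (f b)).
  { apply (eq_is_derive (fun t => fst (f t))); auto. intros t Ht.
    apply is_derive_Reals. apply (H t Ht). }
  assert (E2 : snd (f a) = snd (f b)).
  { apply (eq_is_derive (fun t => snd (f t))); auto. intros t Ht.
    apply is_derive_Reals. apply (H t Ht). }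
  destruct (f a), (f b); simpl in *; subst; reflexivity.
Qed.

Definition cpolar (z : C) : C := (exp (fst z) * cos (snd z), exp (fst z) * sin (snd z))%R.

Lemma CD_cpolar u x l : CD u x l -> CD (fun t => cpolar (u t)) x (cpolar (u x) * l)%C.
Proof.
  intros [U1 U2]. unfold cpolar; split; simpl.
  - pose proof (derivable_pt_lim_mult _ _ _ _ _
      (derivable_pt_lim_comp _ _ _ _ _ U1 (derivable_pt_lim_exp (fst (u x))))
      (derivable_pt_lim_comp _ _ _ _ _ U2 (derivable_pt_lim_cos (snd (u x))))) as K.
    unfold mult_fct, comp in K. eapply dpl_eq; [exact K| ring].
  - pose proof (derivable_pt_lim_mult _ _ _ _ _
      (derivable_pt_lim_comp _ _ _ _ _ U1 (derivable_pt_lim_exp (fst (u x))))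
      (derivable_pt_lim_comp _ _ _ _ _ U2 (derivable_pt_lim_sin (snd (u x))))) as K.
    unfold mult_fct, comp in K. eapply dpl_eq; [exact K| ring].
Qed.

Lemma cpolar_plus a b : cpolar (a + b)%C = (cpolar a * cpolar b)%C.
Proof.
  unfold cpolar; destruct a as [a1 a2], b as [b1 b2]; simpl.
  rewrite exp_plus, cos_plus, sin_plus. apply injective_projections; simpl; ring.
Qed.

Lemma cpolar_0 : cpolar 0%C = 1%C.
Proof. unfold cpolar; simpl. rewrite exp_0, cos_0, sin_0. apply injective_projections; simpl; ring. Qed.

Lemma cpolar_neq0 a : cpolar a <> 0%C.
Proof.
  intro H. unfold cpolar in H. injection H; intros H2 H1.
  pose proof (exp_pos (fst a)). pose proof (sin2_cos2 (snd a)). unfold Rsqr in *.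
  apply Rmult_integral in H1; apply Rmult_integral in H2. destruct H1, H2; nra.
Qed.
Open Scope C_scope.

Lemma CD_eq f x l l' : CD f x l -> l = l' -> CD f x l'.
Proof. intros H <-; exact H. Qed.

Lemma cpow_Cpow z k : cpow z k = Cpow z k.
Proof. induction k; simpl; [reflexivity|]. unfold cpow in *. simpl. rewrite IHk. reflexivity. Qed.

Lemma cpow_S z k : cpow z (S k) = z * cpow z k.
Proof. reflexivity. Qed.
Lemma cpow_0 z : cpow z 0 = 1.
Proof. reflexivity. Qed.

Lemma Cmod_cpow z k : Cmod (cpow z k) = (Cmod z ^ k)%R.
Proof. rewrite cpow_Cpow. apply Cmod_pow. Qed.

Lemma cpow_add z a b : cpow z (a + b) = cpow z a * cpow z b.
Proof. induction a.
  - change (0+b)%nat with b. rewrite cpow_0; ring.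
  - change (S a + b)%nat with (S (a+b)). rewrite !cpow_S, IHa; ring. Qed.

Lemma cpow_mult z w k : cpow (z * w) k = cpow z k * cpow w k.
Proof. induction k; rewrite ?cpow_S, ?cpow_0, ?IHk; ring. Qed.

Lemma cpow_RtoC (t : R) k : cpow (RtoC t) k = RtoC (t ^ k).
Proof. induction k; rewrite ?cpow_S, ?cpow_0, ?IHk; [reflexivity|].
  simpl. unfold RtoC. apply injective_projections; simpl; ring. Qed.

Lemma Re_RtoC_mult (a : R) (z : C) : fst (RtoC a * z) = (a * fst z)%R.
Proof. simpl; ring. Qed.
Lemma Im_RtoC_mult (a : R) (z : C) : snd (RtoC a * z) = (a * snd z)%R.
Proof. simpl; ring. Qed.

Definition CPS (c : nat -> C) (t : R) : C := CSeries (fun k => RtoC (t ^ k) * c k).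

Lemma CPS_eq c t : CPS c t = (PSeries (fun k => fst (c k)) t, PSeries (fun k => snd (c k)) t).
Proof.
  unfold CPS, PSeries. rewrite CSeries_eq. f_equal; apply Series_ext; intro k;
  [rewrite Re_RtoC_mult | rewrite Im_RtoC_mult]; ring.
Qed.

Lemma CPS_ex c t r M : (Rabs t < r)%R -> (forall k, Cmod (c k) * r ^ k <= M)%R ->
  ex_series (fun k => RtoC (t ^ k) * c k).
Proof.
  intros Ht HM.
  assert (Hr : (0 < r)%R) by (pose proof (Rabs_pos t); lra).
  apply (@ex_series_le C_AbsRing C_CompleteNormedModule _ (fun k => M * (Rabs t / r) ^ k)%R).
  - intro k. change norm with Cmod. rewrite Cmod_mult, Cmod_R, <- RPow_abs.
    replace (M * (Rabs t / r) ^ k)%R with (M / r ^ k * Rabs t ^ k)%R.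
    2:{ unfold Rdiv. rewrite Rpow_mult_distr, pow_inv. ring. }
    rewrite Rmult_comm. apply Rmult_le_compat_r. apply pow_le, Rabs_pos.
    apply Rmult_le_reg_r with (r ^ k)%R. apply pow_lt; auto.
    unfold Rdiv. rewrite Rmult_assoc, Rinv_l. rewrite Rmult_1_r; auto.
    apply pow_nonzero; lra.
  - apply (@ex_series_scal_l R_AbsRing R_NormedModule M (fun k => (Rabs t / r) ^ k)%R). exists (/ (1 - Rabs t / r))%R. apply is_series_geom.
    rewrite Rabs_pos_eq. apply Rmult_lt_reg_r with r; auto. unfold Rdiv.
    rewrite Rmult_assoc, Rinv_l; lra.
    apply Rmult_le_pos. apply Rabs_pos. left; apply Rinv_0_lt_compat; auto.
Qed.

Lemma CPS_radius (a : nat -> R) (c : nat -> C) r M :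
  (forall k, Rabs (a k) <= Cmod (c k))%R -> (0 <= r)%R ->
  (forall k, Cmod (c k) * r ^ k <= M)%R -> Rbar_le r (CV_radius a).
Proof.
  intros Ha Hr HM. apply (proj1 (CV_radius_bounded a)). exists M. intro n.
  rewrite Rabs_mult, <- RPow_abs, (Rabs_pos_eq r) by auto.
  eapply Rle_trans; [|apply HM]. apply Rmult_le_compat_r. apply pow_le; auto. apply Ha.
Qed.

Lemma CPS_derive c x r M : (Rabs x < r)%R -> (forall k, Cmod (c k) * r ^ k <= M)%R ->
  CD (CPS c) x (CPS (fun k => RtoC (INR (S k)) * c (S k)) x).
Proof.
  intros Hx HM.
  assert (Hr : (0 <= r)%R) by (pose proof (Rabs_pos x); lra).
  assert (R1 : Rbar_lt (Rabs x) (CV_radius (fun k => fst (c k)))).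
  { eapply Rbar_lt_le_trans; [|apply (CPS_radius _ c r M); auto]. exact Hx.
    intro k. destruct (c k); eapply Rle_trans; [|apply Rmax_Cmod]; apply Rmax_l. }
  assert (R2 : Rbar_lt (Rabs x) (CV_radius (fun k => snd (c k)))).
  { eapply Rbar_lt_le_trans; [|apply (CPS_radius _ c r M); auto]. exact Hx.
    intro k. destruct (c k); eapply Rle_trans; [|apply Rmax_Cmod]; apply Rmax_r. }
  split.
  - eapply dpl_eq.
    + apply (derivable_pt_lim_ext (PSeries (fun k => fst (c k)))).
      intro t; rewrite CPS_eq; reflexivity.
      apply is_derive_Reals. apply is_derive_PSeries; exact R1.
    + rewrite CPS_eq; simpl. apply PSeries_ext. intro k. unfold PS_derive. simpl; ring.
  - eapply dpl_eq.
    + apply (derivable_pt_lim_ext (PSeries (fun k => snd (c k)))).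
      intro t; rewrite CPS_eq; reflexivity.
      apply is_derive_Reals. apply is_derive_PSeries; exact R2.
    + rewrite CPS_eq; simpl. apply PSeries_ext. intro k. unfold PS_derive. simpl; ring.
Qed.
Open Scope C_scope.

Lemma Clim_bound (u : nat -> C) (l : C) (e : nat -> R) :
  (forall n, Cmod (u n - l) <= e n)%R -> is_lim_seq e 0%R ->
  filterlim u eventually (locally l).
Proof.
  intros H He. apply Clim_iff. split.
  - change (is_lim_seq (fun n => fst (u n)) (fst l)).
    apply (is_lim_seq_le_le (fun n => fst l - e n)%R _ (fun n => fst l + e n)%R).
    + intro n. pose proof (H n). pose proof (Rmax_Cmod (u n - l)).
      pose proof (Rmax_l (Rabs (fst (u n - l))) (Rabs (snd (u n - l)))).
      simpl in *. split_Rabs; lra.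
    + replace (Finite (fst l)) with (Finite (fst l - 0)) by (f_equal; ring).
      apply is_lim_seq_minus'; auto. apply is_lim_seq_const.
    + replace (Finite (fst l)) with (Finite (fst l + 0)) by (f_equal; ring).
      apply is_lim_seq_plus'; auto. apply is_lim_seq_const.
  - change (is_lim_seq (fun n => snd (u n)) (snd l)).
    apply (is_lim_seq_le_le (fun n => snd l - e n)%R _ (fun n => snd l + e n)%R).
    + intro n. pose proof (H n). pose proof (Rmax_Cmod (u n - l)).
      pose proof (Rmax_r (Rabs (fst (u n - l))) (Rabs (snd (u n - l)))).
      simpl in *. split_Rabs; lra.
    + replace (Finite (snd l)) with (Finite (snd l - 0)) by (f_equal; ring).
      apply is_lim_seq_minus'; auto. apply is_lim_seq_const.
    + replace (Finite (snd l)) with (Finite (snd l + 0)) by (f_equal; ring).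
      apply is_lim_seq_plus'; auto. apply is_lim_seq_const.
Qed.

Lemma is_series_Cscal (w : C) a l : is_series a l -> is_series (fun k => w * a k) (w * l).
Proof. intro H. apply (@is_series_scal C_AbsRing C_NormedModule w a l H). Qed.

Lemma CSeries_scal (w : C) a : ex_series a -> CSeries (fun k => w * a k) = w * CSeries a.
Proof. intro H. apply CSeries_correct, is_series_Cscal, CSeries_ex, H. Qed.

Lemma sum_n_single (a : nat -> C) : (forall k, a (S k) = 0) -> forall n, sum_n a n = a O.
Proof.
  intros H n; induction n. apply sum_O. rewrite sum_Sn, IHn, H. change (a O + 0 = a O). ring.
Qed.

Lemma CSeries_single (a : nat -> C) : (forall k, a (S k) = 0) -> CSeries a = a O.
Proof.
  intro H. apply CSeries_correct. unfold is_series.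
  eapply filterlim_ext. intro n; symmetry; apply (sum_n_single a H n).
  apply filterlim_const.
Qed.

Lemma CPS_0 c : CPS c 0 = c O.
Proof.
  unfold CPS. rewrite CSeries_single. simpl. change (RtoC 1 * c O = c O). ring.
  intro k. simpl. rewrite Rmult_0_l. change (RtoC 0 * c (S k) = 0). ring.
Qed.

Lemma is_lim_seq_geom_const (x c : R) : (Rabs x < 1)%R -> is_lim_seq (fun n => x ^ n * c)%R 0%R.
Proof.
  intro H. replace (Finite 0) with (Rbar_mult (Finite 0) c) by (simpl; f_equal; ring).
  apply is_lim_seq_scal_r. apply is_lim_seq_geom, H.
Qed.

Lemma is_series_Cgeom (u : C) : (Cmod u < 1)%R -> is_series (cpow u) (/ (1 - u)).
Proof.
  intro H.
  assert (Hu : 1 - u <> 0).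
  { intro E. assert (u = 1) by (replace u with (1 - (1 - u)) by ring; rewrite E; ring).
    subst. rewrite Cmod_1 in H. lra. }
  assert (P : forall n, sum_n (cpow u) n = (1 - cpow u (S n)) / (1 - u)).
  { induction n. rewrite sum_O. change (cpow u 0 = (1 - cpow u 1) / (1 - u)). rewrite cpow_S, cpow_0. field. auto.
    rewrite sum_Sn, IHn. change ((1 - cpow u (S n)) / (1 - u) + cpow u (S n) = (1 - cpow u (S (S n))) / (1 - u)).
    rewrite (cpow_S u (S n)). field. auto. }
  apply (Clim_bound _ _ (fun n => Cmod u ^ S n * / Cmod (1 - u))%R).
  - intro n. rewrite P. right.
    replace ((1 - cpow u (S n)) / (1 - u) - / (1 - u)) with (- (cpow u (S n) / (1 - u))) by (field; auto).
    rewrite Cmod_opp, Cmod_div, Cmod_cpow; auto.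
  - apply (is_lim_seq_incr_1 (fun n => Cmod u ^ n * / Cmod (1 - u))%R).
    apply is_lim_seq_geom_const. rewrite Rabs_pos_eq; auto. apply Cmod_ge_0.
Qed.

Lemma term_le_exp (x : R) k : (0 <= x)%R -> (x ^ k / INR (fact k) <= exp x)%R.
Proof.
  intro Hx. eapply Rle_trans; [|apply (exp_ge_taylor x k Hx)].
  destruct k. simpl. lra.
  rewrite tech5. assert (0 <= sum_f_R0 (fun k0 : nat => x ^ k0 / INR (fact k0)) k)%R.
  apply cond_pos_sum. intro n. apply Rmult_le_pos. apply pow_le; auto.
  left; apply Rinv_0_lt_compat, INR_fact_lt_0. lra.
Qed.

Lemma RtoC_neq0 (x : R) : x <> 0%R -> RtoC x <> 0.
Proof. intros H E. apply H. apply (f_equal fst) in E. exact E. Qed.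

Definition ecoef (z : C) (k : nat) : C := cpow z k / RtoC (INR (fact k)).

Lemma ecoef_bound z r k : (0 <= r)%R -> (Cmod (ecoef z k) * r ^ k <= exp (Cmod z * r))%R.
Proof.
  intro Hr. unfold ecoef. rewrite Cmod_div, Cmod_cpow, Cmod_R, Rabs_pos_eq.
  2: apply pos_INR. 2: { apply RtoC_neq0, INR_fact_neq_0. }
  replace (Cmod z ^ k / INR (fact k) * r ^ k)%R with ((Cmod z * r) ^ k / INR (fact k))%R.
  apply term_le_exp. apply Rmult_le_pos; auto; apply Cmod_ge_0.
  rewrite Rpow_mult_distr. unfold Rdiv. ring.
Qed.

Lemma cexp_CPS z : cexp z = CPS (ecoef z) 1.
Proof.
  unfold cexp, CPS. f_equal. apply functional_extensionality; intro k.
  rewrite pow1. unfold ecoef. change (cpow z k / INR (fact k) = RtoC 1 * (cpow z k / INR (fact k))). ring.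
Qed.

Lemma CPS_ecoef_deriv z t : CD (CPS (ecoef z)) t (z * CPS (ecoef z) t).
Proof.
  set (r := (Rabs t + 1)%R).
  eapply CD_eq. apply (CPS_derive _ t r (exp (Cmod z * r))). unfold r; lra.
  intro k. apply ecoef_bound. unfold r; pose proof (Rabs_pos t); lra.
  unfold CPS. rewrite <- CSeries_scal.
  f_equal. apply functional_extensionality; intro k. unfold ecoef.
  rewrite cpow_S. rewrite fact_simpl, mult_INR.
  assert (INR (fact k) <> 0%R) by apply INR_fact_neq_0.
  assert (INR (S k) <> 0%R) by (apply not_0_INR; lia).
  rewrite RtoC_mult. field. split; apply RtoC_neq0; auto.
  apply (CPS_ex _ t (Rabs t + 1) (exp (Cmod z * (Rabs t + 1)))). lra.
  intro k. apply ecoef_bound. pose proof (Rabs_pos t); lra.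
Qed.

Lemma cexp_polar z : cexp z = cpolar z.
Proof.
  set (H := fun t => CPS (ecoef z) t * cpolar (- (RtoC t * z))).
  assert (HD : forall t, CD H t 0).
  { intro t. eapply CD_eq. apply CD_mult. apply CPS_ecoef_deriv.
    apply CD_cpolar. eapply CD_ext; [|apply (CD_lin 0 (- z))]. intro; simpl. ring.
    simpl. ring. }
  assert (E : H 0%R = H 1%R). { apply (CD_zero H 0 1). intros; auto. lra. }
  unfold H in E. rewrite CPS_0, <- cexp_CPS in E.
  replace (- (RtoC 0 * z)) with (RtoC 0) in E by ring.
  replace (- (RtoC 1 * z)) with (- z) in E by ring.
  rewrite cpolar_0 in E. unfold ecoef in E. rewrite cpow_0 in E. simpl in E.
  assert (cpolar (-z) * cpolar z = 1).
  { rewrite <- cpolar_plus. replace (- z + z) with (RtoC 0) by ring. apply cpolar_0. }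
  replace (cexp z) with (cexp z * cpolar (- z) * cpolar z).
  2:{ rewrite <- Cmult_assoc, H0. ring. }
  rewrite <- E. field.
Qed.
Open Scope C_scope.

Definition lc (k : nat) : C :=
  match k with O => 0 | S k => RtoC ((-1) ^ k / INR (S k)) end.
Definition clog1p (w : C) : C := CSeries (fun k => lc k * cpow w k).

Lemma Cmod_lc k : (Cmod (lc k) <= 1)%R.
Proof.
  destruct k. simpl lc. rewrite Cmod_0; lra.
  change (lc (S k)) with (RtoC ((-1) ^ k / INR (S k))).
  rewrite Cmod_R. unfold Rdiv. rewrite Rabs_mult, pow_1_abs, Rabs_inv, Rabs_pos_eq by apply pos_INR.
  rewrite Rmult_1_l. rewrite S_INR. pose proof (pos_INR k).
  rewrite <- Rinv_1. apply Rinv_le_contravar; lra.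
Qed.

Lemma lc_bound w r k : (0 <= r)%R -> (Cmod w * r <= 1)%R -> (Cmod (lc k * cpow w k) * r ^ k <= 1)%R.
Proof.
  intros Hr Hwr. rewrite Cmod_mult, Cmod_cpow. rewrite Rmult_assoc, <- Rpow_mult_distr.
  pose proof (Cmod_lc k). assert (0 <= (Cmod w * r) ^ k <= 1)%R.
  { split. apply pow_le, Rmult_le_pos; auto; apply Cmod_ge_0. rewrite <- (pow1 k). apply pow_incr. split; auto.
    apply Rmult_le_pos; auto; apply Cmod_ge_0. }
  pose proof (Cmod_ge_0 (lc k)). nra.
Qed.

Lemma cpow_opp w k : cpow (- w) k = RtoC ((-1) ^ k) * cpow w k.
Proof.
  replace (- w) with (RtoC (-1) * w) by (unfold RtoC; apply injective_projections; simpl; ring).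
  rewrite cpow_mult, cpow_RtoC. reflexivity.
Qed.

Lemma Cmod_lt1_neq (u : C) : (Cmod u < 1)%R -> 1 + u <> 0.
Proof.
  intros H E. assert (u = -1) by (replace u with ((1 + u) - 1) by ring; rewrite E; ring).
  subst. rewrite <- Cmod_opp in H. replace (- -1) with (RtoC 1) in H by ring. rewrite Cmod_1 in H. lra.
Qed.

Lemma cexp_clog1p w : (Cmod w < 1)%R -> cexp (clog1p w) = 1 + w.
Proof.
  intro Hw.
  set (c := fun k => lc k * cpow w k).
  set (r := (2 / (1 + Cmod w))%R).
  pose proof (Cmod_ge_0 w) as Hw0.
  assert (Hr1 : (1 < r)%R). { unfold r. apply Rmult_lt_reg_r with (1 + Cmod w)%R. lra.
    unfold Rdiv. rewrite Rmult_assoc, Rinv_l; lra. }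
  assert (Hwr : (Cmod w * r <= 1)%R). { unfold r. apply Rmult_le_reg_r with (1 + Cmod w)%R. lra.
    unfold Rdiv. rewrite !Rmult_assoc, Rinv_l; lra. }
  assert (Hb : forall k, (Cmod (c k) * r ^ k <= 1)%R). { intro k; apply lc_bound; lra. }
  assert (DL : forall t, (0 <= t <= 1)%R ->
     CD (CPS c) t (w / (1 + RtoC t * w))).
  { intros t Ht. assert (Hrt : (Rabs t < r)%R) by (rewrite Rabs_pos_eq; lra).
    eapply CD_eq. apply (CPS_derive c t r 1 Hrt Hb).
    assert (Hu : (Cmod (- (RtoC t * w)) < 1)%R).
    { rewrite Cmod_opp, Cmod_mult, Cmod_R, Rabs_pos_eq by lra. nra. }
    unfold CPS. replace (w / (1 + RtoC t * w)) with (w * / (1 - - (RtoC t * w))) by (unfold Cdiv; f_equal; f_equal; ring).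
    rewrite <- (CSeries_correct _ _ (is_series_Cgeom _ Hu)).
    rewrite <- CSeries_scal. f_equal. apply functional_extensionality; intro k.
    unfold c. change (lc (S k)) with (RtoC ((-1) ^ k / INR (S k))). rewrite cpow_S.
    replace (- (RtoC t * w)) with (RtoC t * (- w)) by ring.
    rewrite cpow_mult, cpow_RtoC, cpow_opp.
    assert (INR (S k) <> 0%R) by (apply not_0_INR; lia).
    unfold Rdiv. rewrite !RtoC_mult, RtoC_inv. field. apply RtoC_neq0; auto. auto.
    exists (/ (1 - - (RtoC t * w))). apply is_series_Cgeom; auto. }
  set (g := fun t : R => cpolar (- CPS c t) * (1 + RtoC t * w)).
  assert (Hg : forall t, (0 <= t <= 1)%R -> CD g t 0).
  { intros t Ht. assert (Hn : 1 + RtoC t * w <> 0).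
    { apply Cmod_lt1_neq. rewrite Cmod_mult, Cmod_R, Rabs_pos_eq by lra. nra. }
    eapply CD_eq. apply CD_mult. apply CD_cpolar. apply CD_opp. apply DL; auto.
    apply CD_lin. cbv beta. field. auto. }
  assert (E : g 0%R = g 1%R) by (apply CD_zero; auto; lra).
  unfold g in E. rewrite CPS_0 in E. unfold c in E. simpl lc in E.
  replace (- (0 * cpow w 0)) with (RtoC 0) in E by ring. rewrite cpolar_0 in E.
  assert (L1 : CPS c 1 = clog1p w).
  { unfold CPS, clog1p. f_equal. apply functional_extensionality; intro k. rewrite pow1.
    change (RtoC 1 * c k = c k). ring. }
  unfold c in L1. rewrite L1 in E. rewrite cexp_polar.
  assert (cpolar (clog1p w) * cpolar (- clog1p w) = 1).
  { rewrite <- cpolar_plus. replace (clog1p w + - clog1p w) with (RtoC 0) by ring. apply cpolar_0. }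
  replace (1 + w) with (cpolar (clog1p w) * (cpolar (- clog1p w) * (1 + RtoC 1 * w))).
  rewrite <- E. ring.
  rewrite Cmult_assoc, H. ring.
Qed.
Open Scope C_scope.

Definition CL (u : nat -> C) (l : C) := filterlim u eventually (locally l).

Lemma CL_iff u l : CL u l <-> is_lim_seq (fun n => fst (u n)) (fst l) /\ is_lim_seq (fun n => snd (u n)) (snd l).
Proof. apply Clim_iff. Qed.

Lemma CL_plus u v a b : CL u a -> CL v b -> CL (fun n => u n + v n) (a + b).
Proof.
  intros Hu Hv. apply CL_iff in Hu as [U1 U2]. apply CL_iff in Hv as [V1 V2].
  apply CL_iff; split; simpl; apply is_lim_seq_plus'; auto.
Qed.

Lemma CL_opp u a : CL u a -> CL (fun n => - u n) (- a).
Proof.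
  intros Hu. apply CL_iff in Hu as [U1 U2]. apply CL_iff; split; simpl.
  apply (is_lim_seq_opp _ (fst a)) in U1. exact U1.
  apply (is_lim_seq_opp _ (snd a)) in U2. exact U2.
Qed.

Lemma CL_mult u v a b : CL u a -> CL v b -> CL (fun n => u n * v n) (a * b).
Proof.
  intros Hu Hv. apply CL_iff in Hu as [U1 U2]. apply CL_iff in Hv as [V1 V2].
  apply CL_iff; split; simpl.
  apply is_lim_seq_minus'; apply is_lim_seq_mult'; auto.
  apply is_lim_seq_plus'; apply is_lim_seq_mult'; auto.
Qed.

Lemma CL_const c : CL (fun _ => c) c.
Proof. apply CL_iff; split; apply is_lim_seq_const. Qed.

Lemma CL_ext u v l : (forall n, u n = v n) -> CL u l -> CL v l.
Proof. intros H. replace v with u; auto. apply functional_extensionality; auto. Qed.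

Lemma CL_shift u l N : CL u l -> CL (fun n => u (n + N)%nat) l.
Proof.
  intro H. apply CL_iff in H as [H1 H2]. apply CL_iff; split.
  apply (is_lim_seq_incr_n (fun n => fst (u n)) N (fst l)); auto.
  apply (is_lim_seq_incr_n (fun n => snd (u n)) N (snd l)); auto.
Qed.

Lemma CL_cpolar u l : CL u l -> CL (fun n => cpolar (u n)) (cpolar l).
Proof.
  intro H. apply CL_iff in H as [H1 H2]. apply CL_iff; unfold cpolar; simpl; split;
  apply is_lim_seq_mult'.
  all: first [ apply (is_lim_seq_continuous exp); [apply derivable_continuous_pt, derivable_pt_exp| auto]
             | apply (is_lim_seq_continuous cos); [apply derivable_continuous_pt, derivable_pt_cos| auto]
             | apply (is_lim_seq_continuous sin); [apply derivable_continuous_pt, derivable_pt_sin| auto]].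
Qed.

Lemma CL_unique u a b : CL u a -> CL u b -> a = b.
Proof. intros H1 H2. rewrite <- (CLim_correct _ _ H1). apply CLim_correct; auto. Qed.

Lemma CL_le u l a B M : CL u l -> (forall N, (M <= N)%nat -> (Cmod (u N - a) <= B)%R) -> (Cmod (l - a) <= B)%R.
Proof.
  intros H HB.
  assert (K : is_lim_seq (fun N => Cmod (u N - a)) (Cmod (l - a))).
  { apply (filterlim_comp _ _ _ (fun N => u N - a) Cmod _ (locally (l - a))).
    apply (CL_plus u (fun _ => - a) l (- a)); auto. apply CL_const.
    apply (@filterlim_norm C_AbsRing C_NormedModule). }
  assert (Rbar_le (Cmod (l - a)) B).
  { apply (is_lim_seq_le_loc (fun N => Cmod (u N - a)) (fun _ => B) _ _); auto. exists M; auto. apply is_lim_seq_const. }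
  exact H0.
Qed.
Open Scope C_scope.

Lemma lc_term_bound w k : (Cmod (lc k * cpow w k) <= Cmod w ^ k)%R.
Proof.
  rewrite Cmod_mult, Cmod_cpow. pose proof (Cmod_lc k). pose proof (Cmod_ge_0 (lc k)).
  pose proof (pow_le (Cmod w) k (Cmod_ge_0 w)). nra.
Qed.

Lemma clog1p_ex w : (Cmod w < 1)%R -> ex_series (fun k => lc k * cpow w k).
Proof.
  intro H. apply (@ex_series_le C_AbsRing C_CompleteNormedModule _ (fun k => Cmod w ^ k)%R).
  intro k; apply lc_term_bound.
  exists (/ (1 - Cmod w))%R. apply is_series_geom. rewrite Rabs_pos_eq; auto. apply Cmod_ge_0.
Qed.

Definition PL (w : C) (M : nat) : C := sum_n (fun k => lc k * cpow w k) M.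

Lemma PL_tail w M : (Cmod w < 1)%R ->
  (Cmod (clog1p w - PL w M) <= Cmod w ^ (S M) / (1 - Cmod w))%R.
Proof.
  intro H. set (x := Cmod w) in *. assert (Hx : (0 <= x)%R) by apply Cmod_ge_0.
  apply (CL_le (sum_n (fun k => lc k * cpow w k)) _ _ _ M).
  apply (CSeries_ex _ (clog1p_ex w H)).
  intros N HN. replace N with (M + (N - M))%nat by lia. generalize (N - M)%nat as p. intro p.
  assert (Cmod ((sum_n (fun k => lc k * cpow w k) (M + p) - PL w M)%C) <= x ^ S M * (1 - x ^ p) / (1 - x))%R.
  { induction p.
    - rewrite Nat.add_0_r. unfold PL. replace (sum_n (fun k : nat => lc k * cpow w k) M - sum_n (fun k : nat => lc k * cpow w k) M) with (RtoC 0) by ring.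
      rewrite Cmod_0. simpl. right. field. lra.
    - replace (M + S p)%nat with (S (M + p)) by lia. rewrite sum_Sn.
      replace (plus (sum_n (fun k : nat => lc k * cpow w k) (M + p)) (lc (S (M + p)) * cpow w (S (M + p))) - PL w M)
        with ((sum_n (fun k : nat => lc k * cpow w k) (M + p) - PL w M) + (lc (S (M + p)) * cpow w (S (M + p)))).
      2: { change plus with Cplus. ring. }
      eapply Rle_trans. apply Cmod_triangle. eapply Rle_trans. apply Rplus_le_compat. exact IHp. apply lc_term_bound.
      fold x. right. replace (S (M + p)) with (S M + p)%nat by lia. rewrite pow_add. simpl. field. lra. }
  eapply Rle_trans; [exact H0|]. unfold Rdiv. apply Rmult_le_compat_r. left; apply Rinv_0_lt_compat; lra.
  pose proof (pow_le x (S M) Hx). assert (0 <= x ^ p)%R by (apply pow_le; auto). nra.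
Qed.
Open Scope C_scope.

Fixpoint csum (f : nat -> C) (m : nat) : C :=
  match m with O => 0 | S m => csum f m + f m end.

Lemma csum_S f m : csum f (S m) = csum f m + f m.
Proof. reflexivity. Qed.

Lemma csum_sum_n f N : sum_n f N = csum f (S N).
Proof.
  induction N. rewrite sum_O. simpl. symmetry. apply Cplus_0_l.
  rewrite sum_Sn, IHN. reflexivity.
Qed.

Lemma csum_ext f g m : (forall i, (i < m)%nat -> f i = g i) -> csum f m = csum g m.
Proof. induction m; intros H; simpl; auto. rewrite IHm, H; auto. Qed.

Lemma csum_plus f g m : csum (fun i => f i + g i) m = csum f m + csum g m.
Proof. induction m; simpl. ring. rewrite IHm. ring. Qed.

Lemma csum_opp f m : csum (fun i => - f i) m = - csum f m.
Proof. induction m; simpl. ring. rewrite IHm. ring. Qed.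

Lemma csum_zero m : csum (fun _ => 0) m = 0.
Proof. induction m; simpl; auto. rewrite IHm. ring. Qed.

Lemma csum_bound f m B : (forall i, (i < m)%nat -> (Cmod (f i) <= B)%R) -> (Cmod (csum f m) <= INR m * B)%R.
Proof.
  induction m; intro H; cbn [csum]. rewrite Cmod_0. simpl; lra.
  eapply Rle_trans. apply Cmod_triangle. rewrite S_INR.
  pose proof (IHm (fun i Hi => H i ltac:(lia))). pose proof (H m ltac:(lia)). lra.
Qed.

Lemma csum_reindex (X : nat -> C) n m :
  csum (fun j => if Nat.leb (S n) j then X j else 0) (S (n + m)) = csum (fun i => X (S n + i)%nat) m.
Proof.
  induction m.
  - rewrite Nat.add_0_r. rewrite (csum_ext _ (fun _ => 0)). apply csum_zero.
    intros i Hi. destruct (Nat.leb_spec (S n) i); [lia|auto].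
  - replace (S (n + S m)) with (S (S (n + m))) by lia. rewrite (csum_S _ (S (n + m))), (csum_S _ m), IHm.
    destruct (Nat.leb_spec (S n) (S (n + m))); [|lia]. reflexivity.
Qed.

Open Scope nat_scope.
Lemma div_succ N j : (0 < j)%nat ->
  (S N / j = if Nat.eqb (S N mod j) 0 then S (N / j) else N / j)%nat.
Proof.
  intro Hj. pose proof (Nat.div_mod N j ltac:(lia)). pose proof (Nat.mod_upper_bound N j ltac:(lia)).
  set (a := N / j) in *. set (b := N mod j) in *.
  destruct (Nat.eq_dec (S b) j).
  - assert (E1 : S N = j * S a) by lia.
    rewrite E1, Nat.mul_comm, Nat.Div0.mod_mul, Nat.div_mul by lia. reflexivity.
  - assert (E1 : S N = j * a + S b) by lia.
    assert (S N mod j = S b) by (symmetry; apply (Nat.mod_unique _ _ a); lia).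
    assert (S N / j = a) by (symmetry; apply (Nat.div_unique _ _ _ (S b)); lia).
    rewrite H1, H2. destruct (Nat.eqb_spec (S b) 0); [lia|auto].
Qed.

Close Scope nat_scope.
Definition dterm (F : nat -> nat -> C) (s d : nat) : C :=
  if andb (Nat.ltb 0%nat d) (Nat.eqb (s mod d) 0%nat) then F d (s / d)%nat else 0.

Definition jterm (F : nat -> nat -> C) (N j : nat) : C :=
  if Nat.ltb 0%nat j then sum_n (fun K => if Nat.ltb 0%nat K then F j K else RtoC 0) (N / j)%nat else 0.

Lemma regroup F N :
  sum_n (fun s => sum_n (dterm F s) s) N = csum (jterm F N) (S N).
Proof.
  induction N.
  - rewrite sum_O, sum_O. unfold dterm. simpl. unfold jterm. simpl. symmetry; apply Cplus_0_l.
  - rewrite sum_Sn, IHN. change (csum (jterm F N) (S N) + sum_n (dterm F (S N)) (S N) = csum (jterm F (S N)) (S N) + jterm F (S N) (S N)).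
    rewrite sum_Sn. change plus with Cplus.
    assert (E1 : jterm F (S N) (S N) = F (S N) 1%nat).
    { unfold jterm. rewrite Nat.div_same by lia. change (Nat.ltb 0 (S N)) with true. cbv iota beta.
      rewrite sum_Sn, sum_O. change (Nat.ltb 0 1) with true. change (Nat.ltb 0 0) with false. cbv iota beta.
      apply Cplus_0_l. }
    assert (E2 : dterm F (S N) (S N) = F (S N) 1%nat).
    { unfold dterm. rewrite Nat.Div0.mod_same, Nat.div_same by lia. reflexivity. }
    rewrite E1, E2.
    assert (E3 : csum (jterm F (S N)) (S N) = csum (fun j => jterm F N j + dterm F (S N) j) (S N)).
    { apply csum_ext. intros j Hj. unfold jterm, dterm.
      destruct (Nat.ltb_spec 0%nat j) as [H|H]; cbv iota beta.
      - rewrite (div_succ N j H). destruct (Nat.eqb_spec (S N mod j) 0%nat) as [Hm|Hm]; cbv iota beta.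
        + rewrite sum_Sn. reflexivity.
        + symmetry; apply Cplus_0_r.
      - symmetry; apply Cplus_0_l. }
    rewrite E3, csum_plus, <- (csum_sum_n (dterm F (S N)) N). apply Cplus_assoc.
Qed.
Open Scope R_scope.

Lemma sumR_zero s : sum_n (fun _ : nat => 0) s = 0.
Proof. induction s. apply sum_O. rewrite sum_Sn, IHs. apply Rplus_0_r. Qed.

Lemma sumR_ind (X : nat -> R) e0 s :
  sum_n (fun e => if Nat.eqb e e0 then X e else 0) s = if Nat.leb e0 s then X e0 else 0.
Proof.
  induction s.
  - rewrite sum_O. destruct (Nat.eqb_spec 0 e0); destruct (Nat.leb_spec e0 0); subst; auto; lia.
  - rewrite sum_Sn, IHs. change plus with Rplus.
    destruct (Nat.eqb_spec (S s) e0); destruct (Nat.leb_spec e0 s); destruct (Nat.leb_spec e0 (S s)); subst; try lia; lra.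
Qed.

Lemma mul_eqb s d e : (0 < s)%nat ->
  Nat.eqb (d * e) s = andb (andb (Nat.ltb 0 d) (Nat.eqb (s mod d) 0)) (Nat.eqb e (s / d)).
Proof.
  intro Hs. apply Bool.eq_iff_eq_true. rewrite !Bool.andb_true_iff, Nat.eqb_eq, Nat.ltb_lt, !Nat.eqb_eq.
  split.
  - intro H. assert (d <> 0)%nat by (intro; subst; lia).
    subst s. rewrite Nat.mul_comm, Nat.Div0.mod_mul, Nat.div_mul by auto. lia.
  - intros [[H1 H2] H3]. subst e. pose proof (Nat.div_mod s d ltac:(lia)). lia.
Qed.

Lemma div_le_self s d : (0 < d)%nat -> (s / d <= s)%nat.
Proof. intro. apply Nat.Div0.div_le_upper_bound; nia. Qed.

Lemma divsum_inv s P g : (0 < s)%nat ->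
  divsum s P g = divsum s (fun e => P (s / e)%nat) (fun e => g (s / e)%nat).
Proof.
  intro Hs. unfold divsum.
  set (D := fun d e => if Nat.eqb (d * e) s then (if P d then g d else 0) else 0).
  transitivity (sum_n (fun d => sum_n (fun e => D d e) s) s).
  - apply sum_n_ext_loc. intros d Hd. unfold D.
    rewrite (sum_n_ext _ (fun e => if andb (Nat.ltb 0 d) (Nat.eqb (s mod d) 0) then
        (if Nat.eqb e (s / d) then (if P d then g d else 0) else 0) else 0)).
    2:{ intro e. rewrite mul_eqb by auto. destruct (Nat.ltb 0 d), (Nat.eqb (s mod d) 0), (Nat.eqb e (s / d)); reflexivity. }
    destruct (andb (Nat.ltb 0 d) (Nat.eqb (s mod d) 0)) eqn:Ec; simpl.
    + rewrite (sumR_ind (fun _ => if P d then g d else 0)). apply andb_prop in Ec as [E1 E2].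
      apply Nat.ltb_lt in E1. destruct (Nat.leb_spec (s / d) s). auto. pose proof (div_le_self s d E1). lia.
    + symmetry. apply sumR_zero.
  - rewrite sum_n_switch. apply sum_n_ext_loc. intros e He. unfold D.
    rewrite (sum_n_ext _ (fun d => if andb (Nat.ltb 0 e) (Nat.eqb (s mod e) 0) then
        (if Nat.eqb d (s / e) then (if P d then g d else 0) else 0) else 0)).
    2:{ intro d. rewrite Nat.mul_comm, mul_eqb by auto. destruct (Nat.ltb 0 e), (Nat.eqb (s mod e) 0), (Nat.eqb d (s / e)); reflexivity. }
    destruct (andb (Nat.ltb 0 e) (Nat.eqb (s mod e) 0)) eqn:Ec; simpl.
    + rewrite (sumR_ind (fun d => if P d then g d else 0)). apply andb_prop in Ec as [E1 E2].
      apply Nat.ltb_lt in E1. destruct (Nat.leb_spec (s / e) s). auto. pose proof (div_le_self s e E1). lia.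
    + apply sumR_zero.
Qed.
Open Scope R_scope.

Lemma A1_A2 n s : A1 n s = INR s * A2 n s.
Proof.
  destruct (Nat.eq_dec s 0) as [->|Hs].
  - unfold A1, divsum. rewrite sum_O. simpl. ring.
  - unfold A1. rewrite divsum_inv by lia. unfold A2, divsum.
    rewrite <- (sum_n_mult_l (K := R_Ring)). apply sum_n_ext_loc. intros e He.
    match goal with |- ?a = ?b => change (@eq R a b) end.
    change mult with Rmult.
    destruct (Nat.ltb_spec 0 e) as [He0|He0]; [|simpl; ring].
    destruct (Nat.eqb_spec (s mod e) 0) as [Hm|Hm]; [|simpl; ring]. cbn [andb].
    pose proof (Nat.div_mod s e ltac:(lia)) as Hd. rewrite Hm, Nat.add_0_r in Hd.
    set (K := (s / e)%nat) in *.
    assert (HK0 : K <> 0%nat) by (intro E; rewrite E in Hd; lia).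
    assert (E1 : (s / K)%nat = e) by (rewrite Hd at 1; apply Nat.div_mul; auto).
    rewrite E1.
    assert (E2 : Nat.leb (S n) K = Nat.leb (e * S n) s).
    { rewrite Hd. destruct (Nat.leb_spec (S n) K), (Nat.leb_spec (e * S n) (e * K)); auto; nia. }
    rewrite E2. destruct (Nat.leb (e * S n) s); [|ring].
    assert (INR s = INR e * INR K) by (rewrite Hd at 1; apply mult_INR).
    rewrite H. field. apply not_0_INR; lia.
Qed.

Lemma A2_0 n : A2 n 0 = 0.
Proof. unfold A2, divsum. rewrite sum_O. reflexivity. Qed.

Open Scope C_scope.
Definition sig1 (q : C) n s := cpow q s / RtoC (INR s) * RtoC (A1 n s).
Definition sig2 (q : C) n s := cpow q s * RtoC (A2 n s).

Lemma sig12 q n s : sig1 q n s = sig2 q n s.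
Proof.
  unfold sig1, sig2. rewrite A1_A2.
  destruct (Nat.eq_dec s 0) as [->|Hs].
  - rewrite A2_0. simpl INR. rewrite Rmult_0_l. ring.
  - rewrite RtoC_mult. field. apply RtoC_neq0, not_0_INR; auto.
Qed.

Definition Fq (q : C) n (j K : nat) : C :=
  if Nat.leb (S n) j then - (lc K * cpow (cpow q j) K) else 0.

Lemma RtoC_sum_n (f : nat -> R) s : RtoC (sum_n f s) = sum_n (fun d => RtoC (f d)) s.
Proof.
  induction s. rewrite !sum_O; auto. rewrite !sum_Sn, <- IHs.
  apply RtoC_plus.
Qed.

Lemma Cmult_sum_n (c : C) (f : nat -> C) s : c * sum_n f s = sum_n (fun d => c * f d) s.
Proof.
  induction s. rewrite !sum_O; auto. rewrite !sum_Sn, <- IHs. change plus with Cplus. ring.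
Qed.

Lemma cpow_pow z a b : cpow (cpow z a) b = cpow z (a * b).
Proof.
  induction b. rewrite Nat.mul_0_r. reflexivity.
  rewrite cpow_S, IHb. replace (a * S b)%nat with (a + a * b)%nat by lia. rewrite cpow_add. reflexivity.
Qed.

Lemma sig1_dterm q n s : sig1 q n s = sum_n (dterm (Fq q n) s) s.
Proof.
  unfold sig1, A1, divsum. rewrite RtoC_sum_n, Cmult_sum_n. apply sum_n_ext_loc. intros d Hd.
  match goal with |- ?a = ?b => change (@eq C a b) end.
  unfold dterm, Fq.
  destruct (Nat.ltb_spec 0 d) as [Hd0|Hd0]; [|simpl; ring].
  destruct (Nat.eqb_spec (s mod d) 0) as [Hm|Hm]; [|simpl; ring]. cbn [andb].
  destruct (Nat.leb_spec (S n) d); [|ring].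
  pose proof (Nat.div_mod s d ltac:(lia)) as Hdm. rewrite Hm, Nat.add_0_r in Hdm.
  set (K := (s / d)%nat) in *.
  assert (HK0 : K <> 0%nat) by (intro E; rewrite E in Hdm; lia).
  destruct K as [|K']; [congruence|].
  rewrite cpow_pow, <- Hdm. change (lc (S K')) with (RtoC ((-1) ^ K' / INR (S K'))).
  assert (INR s = INR d * INR (S K'))%R by (rewrite Hdm at 1; apply mult_INR).
  rewrite H0.
  assert (INR d <> 0)%R by (apply not_0_INR; lia).
  assert (INR (S K') <> 0)%R by (apply not_0_INR; lia).
  replace ((-1) ^ S K' * INR d)%R with (- ((-1)^K' * INR d))%R by (simpl; ring).
  unfold Rdiv. rewrite RtoC_opp, !RtoC_mult, RtoC_inv. field.
  split; apply RtoC_neq0; auto. auto.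
Qed.
Open Scope R_scope.

Lemma pow_decr r a b : 0 <= r <= 1 -> (a <= b)%nat -> r ^ b <= r ^ a.
Proof.
  intros Hr Hab. replace b with (a + (b - a))%nat by lia. rewrite pow_add.
  pose proof (pow_le r a (proj1 Hr)). assert (r ^ (b - a) <= 1).
  { rewrite <- (pow1 (b - a)). apply pow_incr. lra. }
  assert (0 <= r ^ (b - a)) by (apply pow_le; lra). nra.
Qed.

Lemma lin_geom_ex r : 0 < r < 1 -> ex_series (fun s => INR (S s) * r ^ s).
Proof.
  intro Hr.
  apply (ex_series_ext (fun s => Rabs (INR (S s) * r ^ s))).
  { intro s. apply Rabs_pos_eq. apply Rmult_le_pos. apply pos_INR. apply pow_le; lra. }
  apply (ex_series_DAlembert _ r). lra.
  intro s. apply Rmult_integral_contrapositive. split. apply not_0_INR; lia. apply pow_nonzero; lra.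
  apply (is_lim_seq_ext (fun s => (1 + / INR (S s)) * r)).
  { intro s. rewrite Rabs_pos_eq. rewrite !S_INR. simpl. assert (r ^ s <> 0) by (apply pow_nonzero; lra). pose proof (pos_INR s). field. repeat split; auto; lra.
    apply Rmult_le_pos. apply Rmult_le_pos. apply pos_INR. apply Rmult_le_pos; [lra|apply pow_le; lra].
    left; apply Rinv_0_lt_compat. apply Rmult_lt_0_compat. apply lt_0_INR; lia. apply pow_lt; lra. }
  replace (Finite r) with (Rbar_mult (Finite (1 + 0)) r) by (simpl; f_equal; ring).
  apply is_lim_seq_scal_r. apply is_lim_seq_plus'. apply is_lim_seq_const.
  replace (Finite 0) with (Rbar_inv p_infty) by reflexivity.
  apply is_lim_seq_inv. apply (is_lim_seq_incr_1 INR). apply is_lim_seq_INR. discriminate.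
Qed.

Lemma lin_geom_lim r : 0 < r < 1 -> is_lim_seq (fun s => INR (S s) * r ^ s) 0.
Proof. intro; apply ex_series_lim_0, lin_geom_ex; auto. Qed.

Lemma A2_bound_gen (P : nat -> bool) t s :
  Rabs (sum_n (fun d => if andb (andb (Nat.ltb 0 d) (Nat.eqb (t mod d) 0)) (P d) then (-1) ^ d / INR d else 0) s) <= INR (S s).
Proof.
  induction s.
  - rewrite sum_O. simpl. rewrite Rabs_R0; lra.
  - rewrite sum_Sn. change plus with Rplus. eapply Rle_trans. apply Rabs_triang.
    rewrite (S_INR (S s)). apply Rplus_le_compat; auto.
    destruct (andb _ _) eqn:E.
    + apply andb_prop in E as [E _]. apply andb_prop in E as [E _]. apply Nat.ltb_lt in E.
      unfold Rdiv. rewrite Rabs_mult, pow_1_abs, Rabs_inv, Rabs_pos_eq by apply pos_INR.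
      rewrite Rmult_1_l. rewrite <- Rinv_1. apply Rinv_le_contravar. lra. rewrite S_INR. pose proof (pos_INR s); lra.
    + rewrite Rabs_R0; lra.
Qed.

Lemma A2_bound n s : Rabs (A2 n s) <= INR (S s).
Proof. apply A2_bound_gen. Qed.

Open Scope C_scope.

Lemma sig2_ex q n : (0 < Cmod q < 1)%R -> ex_series (sig2 q n).
Proof.
  intro Hq. apply (@ex_series_le C_AbsRing C_CompleteNormedModule _ (fun s => INR (S s) * Cmod q ^ s)%R).
  - intro s. change norm with Cmod. unfold sig2. rewrite Cmod_mult, Cmod_cpow, Cmod_R.
    rewrite Rmult_comm. apply Rmult_le_compat_r. apply pow_le, Cmod_ge_0. apply A2_bound.
  - apply lin_geom_ex; auto.
Qed.

Lemma sig1_ex q n : (0 < Cmod q < 1)%R -> ex_series (sig1 q n).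
Proof.
  intro Hq. apply (ex_series_ext (sig2 q n)). intro; symmetry; apply sig12. apply sig2_ex; auto.
Qed.

Lemma cexp_plus a b : cexp (a + b) = cexp a * cexp b.
Proof. rewrite !cexp_polar. apply cpolar_plus. Qed.

Lemma cexp_0 : cexp 0 = 1.
Proof. rewrite cexp_polar. apply cpolar_0. Qed.

Lemma Cmod_cpow_lt q k : (Cmod q < 1)%R -> (Cmod (cpow q (S k)) < 1)%R.
Proof.
  intro H. rewrite Cmod_cpow. pose proof (Cmod_ge_0 q).
  pose proof (pow_decr (Cmod q) 1 (S k) ltac:(lra) ltac:(lia)). rewrite pow_1 in H1. lra.
Qed.

Lemma qpoch_S a q m : qpoch a q (S m) = qpoch a q m * (1 - a * cpow q m).
Proof. reflexivity. Qed.

Lemma cexp_Lambda q n m : (Cmod q < 1)%R ->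
  cexp (csum (fun i => clog1p (cpow q (S n + i))) m) = qpoch (- cpow q (S n)) q m.
Proof.
  intro Hq. induction m.
  - simpl. apply cexp_0.
  - rewrite csum_S, cexp_plus, IHm, cexp_clog1p by (apply Cmod_cpow_lt; auto).
    rewrite qpoch_S, cpow_add. ring.
Qed.

Lemma jterm_Fq q n N j :
  jterm (Fq q n) N j = if Nat.leb (S n) j then - PL (cpow q j) (N / j)%nat else 0.
Proof.
  unfold jterm, Fq, PL. destruct (Nat.ltb_spec 0 j).
  - destruct (Nat.leb (S n) j).
    + rewrite <- (sum_n_ext (fun K => - (lc K * cpow (cpow q j) K))).
      2:{ intro K. destruct (Nat.ltb_spec 0 K); auto. replace K with 0%nat by lia. simpl. ring. }
      clear. induction (N / j)%nat as [|k IHk]. rewrite !sum_O; auto. rewrite !sum_Sn, IHk. change plus with Cplus. ring.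
    + rewrite (sum_n_ext _ (fun _ => RtoC 0)). 2:{ intro K; destruct (Nat.ltb 0 K); auto. }
      clear. induction (N / j)%nat as [|k IHk]. rewrite !sum_O; auto. rewrite !sum_Sn, IHk. change plus with Cplus. ring.
  - destruct (Nat.leb_spec (S n) j); [lia|auto].
Qed.

Lemma S_regroup q n m :
  sum_n (sig1 q n) (n + m) = - csum (fun i => PL (cpow q (S n + i)) ((n + m) / (S n + i))%nat) m.
Proof.
  rewrite (sum_n_ext _ (fun s => sum_n (dterm (Fq q n) s) s)) by (intro; apply sig1_dterm).
  rewrite regroup. rewrite (csum_ext _ (fun j => if Nat.leb (S n) j then - PL (cpow q j) ((n + m) / j)%nat else 0)).
  2:{ intros; apply jterm_Fq. }
  rewrite (csum_reindex (fun j => - PL (cpow q j) ((n + m) / j)%nat)). apply csum_opp.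
Qed.
Open Scope C_scope.

Lemma csum_minus f g m : csum (fun i => f i - g i) m = csum f m - csum g m.
Proof. induction m; simpl. ring. rewrite IHm. ring. Qed.

Lemma term_tail_bound q n m i : (0 < Cmod q < 1)%R -> (i < m)%nat ->
  (Cmod (clog1p (cpow q (S n + i)) - PL (cpow q (S n + i)) ((n + m) / (S n + i))%nat)
     <= Cmod q ^ (S (n + m)) / (1 - Cmod q))%R.
Proof.
  intros Hq Hi. set (j := (S n + i)%nat). set (M := ((n + m) / j)%nat).
  assert (Hw : (Cmod (cpow q j) < 1)%R) by (apply Cmod_cpow_lt; lra).
  eapply Rle_trans. apply PL_tail; auto. rewrite Cmod_cpow.
  rewrite <- pow_mult.
  assert (Hexp : (S (n + m) <= j * S M)%nat).
  { pose proof (Nat.div_mod (n + m) j ltac:(unfold j; lia)). pose proof (Nat.mod_upper_bound (n + m) j ltac:(unfold j; lia)).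
    fold M in H. nia. }
  assert (Hrj : ((Cmod q) ^ j <= (Cmod q))%R). { pose proof (pow_decr (Cmod q) 1 j ltac:(lra) ltac:(unfold j; lia)). rewrite pow_1 in H. auto. }
  assert (0 <= (Cmod q) ^ (j * S M))%R by (apply pow_le; lra).
  pose proof (pow_decr (Cmod q) _ _ ltac:(lra) Hexp).
  unfold Rdiv. apply Rmult_le_compat; auto. left; apply Rinv_0_lt_compat; lra.
  apply Rinv_le_contravar; lra.
Qed.

Theorem Tn_lim q n : (0 < Cmod q < 1)%R ->
  CL (qpoch (- cpow q (S n)) q) (cexp (- CSeries (sig1 q n))).
Proof.
  intro Hq. set (L := CSeries (sig1 q n)).
  assert (HS : CL (sum_n (sig1 q n)) L) by (apply CSeries_ex, sig1_ex; auto).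
  set (Lam := fun m => csum (fun i => clog1p (cpow q (S n + i))) m).
  assert (D : CL (fun m => Lam m + sum_n (sig1 q n) (n + m)) 0).
  { apply (Clim_bound _ _ (fun m => INR (S (m + S n)) * (Cmod q) ^ (m + S n) * / (1 - (Cmod q)))%R).
    - intro m. unfold Lam. rewrite S_regroup.
      replace (csum (fun i : nat => clog1p (cpow q (S n + i))) m +
        - csum (fun i : nat => PL (cpow q (S n + i)) ((n + m) / (S n + i))%nat) m - 0)
      with (csum (fun i => clog1p (cpow q (S n + i)) - PL (cpow q (S n + i)) ((n + m) / (S n + i))%nat) m).
      2:{ rewrite csum_minus. ring. }
      eapply Rle_trans. apply csum_bound. intros i Hi. apply term_tail_bound; auto.
      replace (m + S n)%nat with (S (n + m)) by lia.
      rewrite Rmult_assoc. unfold Rdiv. apply Rmult_le_compat_r.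
      apply Rmult_le_pos. apply pow_le; lra. left; apply Rinv_0_lt_compat; lra.
      apply le_INR. lia.
    - replace 0%R with (0 * / (1 - (Cmod q)))%R by ring.
      apply (is_lim_seq_scal_r _ _ 0%R).
      apply (is_lim_seq_incr_n (fun s => INR (S s) * (Cmod q) ^ s)%R (S n) 0%R). apply lin_geom_lim; auto. }
  assert (HL : CL Lam (- L)).
  { apply (CL_ext (fun m => (Lam m + sum_n (sig1 q n) (n + m)) + - sum_n (sig1 q n) (m + n))).
    intro m. rewrite Nat.add_comm. ring.
    replace (- L) with (0 + - L) by ring. apply CL_plus; auto. apply CL_opp. apply CL_shift; auto. }
  apply (CL_ext (fun m => cpolar (Lam m))).
  intro m. rewrite <- cexp_polar. apply cexp_Lambda. lra.
  rewrite cexp_polar. apply CL_cpolar; auto.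
Qed.
Open Scope R_scope.

Lemma exp_mono a b : a <= b -> exp a <= exp b.
Proof. intro H. destruct H. left; apply exp_increasing; auto. subst; lra. Qed.

Lemma one_minus_ge (x r : R) : 0 <= x <= r -> r < 1 -> exp (- (x / (1 - r))) <= 1 - x.
Proof.
  intros Hx Hr.
  eapply Rle_trans. apply exp_mono with (b := - (x / (1 - x))).
  { apply Ropp_le_contravar. unfold Rdiv. apply Rmult_le_compat_l. lra.
    apply Rinv_le_contravar; lra. }
  rewrite exp_Ropp. pose proof (exp_ineq1_le (x / (1 - x))).
  assert (1 + x / (1 - x) = / (1 - x)) by (field; lra).
  rewrite H0 in H. pose proof (exp_pos (x / (1 - x))).
  apply (Rmult_le_reg_r (exp (x / (1 - x)))); auto. rewrite Rinv_l by lra.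
  apply Rmult_le_compat_l with (r := 1 - x) in H; [|lra]. rewrite Rinv_r in H by lra. lra.
Qed.

Lemma Cmod_1plus_ge (w : C) : 1 - Cmod w <= Cmod (1 + w)%C.
Proof.
  pose proof (Cmod_triangle (1 + w)%C (- w)%C). rewrite Cmod_opp in H.
  replace (1 + w + - w)%C with (RtoC 1) in H by ring. rewrite Cmod_1 in H. lra.
Qed.

Definition Pq (q : C) n := qpoch (- q) q n.

Lemma qpoch_lower_aux q n : Cmod q < 1 ->
  exp (- (Cmod q * (1 - Cmod q ^ n) / (1 - Cmod q) ^ 2)) <= Cmod (Pq q n).
Proof.
  intro Hq. pose proof (Cmod_ge_0 q) as Hq0. set (r := Cmod q) in *.
  induction n.
  - unfold Pq. simpl qpoch. rewrite Cmod_1. simpl. replace (- (r * (1 - 1) / ((1 - r) * ((1 - r) * 1)))) with 0 by (field; lra).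
    rewrite exp_0; lra.
  - unfold Pq. rewrite qpoch_S. fold (Pq q n). rewrite Cmod_mult.
    replace (1 - - q * cpow q n)%C with (1 + cpow q (S n))%C by (rewrite cpow_S; ring).
    assert (Hx : 0 <= r ^ S n <= r).
    { split. apply pow_le; auto. pose proof (pow_decr r 1 (S n) ltac:(lra) ltac:(lia)). rewrite pow_1 in H; auto. }
    pose proof (one_minus_ge _ _ Hx Hq).
    pose proof (Cmod_1plus_ge (cpow q (S n))). rewrite Cmod_cpow in H0. fold r in H0.
    replace (- (r * (1 - r ^ S n) / (1 - r) ^ 2)) with (- (r * (1 - r ^ n) / (1 - r) ^ 2) + - (r ^ S n / (1 - r))).
    2:{ simpl. field. lra. }
    rewrite exp_plus. apply Rmult_le_compat; auto; try (left; apply exp_pos). lra.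
Qed.

Definition cq (q : C) := exp (- (Cmod q / (1 - Cmod q) ^ 2)).

Lemma qpoch_lower q n : Cmod q < 1 -> cq q <= Cmod (Pq q n).
Proof.
  intro Hq. eapply Rle_trans; [|apply qpoch_lower_aux; auto]. unfold cq. apply exp_mono.
  apply Ropp_le_contravar. unfold Rdiv. apply Rmult_le_compat_r.
  left; apply Rinv_0_lt_compat. pose proof (Cmod_ge_0 q). apply pow_lt; lra.
  pose proof (Cmod_ge_0 q). pose proof (pow_le (Cmod q) n H). nra.
Qed.

Lemma Pq_neq0 q n : Cmod q < 1 -> Pq q n <> 0%C.
Proof.
  intros Hq E. pose proof (qpoch_lower q n Hq). rewrite E, Cmod_0 in H.
  unfold cq in H. pose proof (exp_pos (- (Cmod q / (1 - Cmod q) ^ 2))). lra.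
Qed.
Open Scope C_scope.

Lemma Cneq0_mod (q : C) : q <> 0 -> (0 < Cmod q)%R.
Proof. intro H; apply Cmod_gt_0; auto. Qed.

Lemma cpow_neq0 (q : C) k : q <> 0 -> cpow q k <> 0.
Proof. intros Hq E. apply (f_equal Cmod) in E. rewrite Cmod_cpow, Cmod_0 in E.
  pose proof (Cneq0_mod q Hq). pose proof (pow_lt (Cmod q) k H). lra. Qed.

Lemma cpow_inv (q : C) k : q <> 0 -> cpow (/ q) k = / cpow q k.
Proof.
  intro Hq. induction k. rewrite !cpow_0. field.
  rewrite !cpow_S, IHk. field. split; auto. apply cpow_neq0; auto.
Qed.

Lemma qpoch_inv (q : C) n : q <> 0 ->
  qpoch (- / q) (/ q) n * qpoch (- / q) (/ q) n * cpow q (n * S n) = Pq q n * Pq q n.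
Proof.
  intro Hq. unfold Pq. induction n.
  - simpl qpoch. rewrite Nat.mul_0_l, cpow_0. ring.
  - rewrite !qpoch_S.
    replace (S n * S (S n))%nat with (n * S n + S n + S n)%nat by lia.
    rewrite !cpow_add, cpow_inv by auto.
    pose proof (cpow_neq0 q n Hq).
    transitivity (qpoch (- / q) (/ q) n * qpoch (- / q) (/ q) n * cpow q (n * S n) *
       ((1 + / q * / cpow q n) * cpow q (S n)) * ((1 + / q * / cpow q n) * cpow q (S n))).
    { ring. }
    rewrite IHn. rewrite cpow_S. field. auto.
Qed.

Lemma fterm_inv (q : C) n : q <> 0 -> Pq q n <> 0 ->
  f_term (/ q) n = cpow q n / (Pq q n * Pq q n).
Proof.
  intros Hq HP. unfold f_term. pose proof (qpoch_inv q n Hq) as E.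
  set (Q := qpoch (- / q) (/ q) n) in *.
  assert (HQ : Q <> 0). { intro X. rewrite X in E.
    assert (Pq q n * Pq q n = 0) by (rewrite <- E; ring).
    revert H. apply Cmult_neq_0; auto. }
  rewrite cpow_inv by auto.
  replace (n * S n)%nat with (n * n + n)%nat in E by lia. rewrite cpow_add in E.
  rewrite <- E. field. repeat split; auto; apply cpow_neq0; auto.
Qed.
Open Scope C_scope.

Lemma cq_pos q : (0 < cq q)%R.
Proof. apply exp_pos. Qed.

Lemma inv_form_bound q n : (Cmod q < 1)%R -> (Cmod (cpow q n / (Pq q n * Pq q n)) <= Cmod q ^ n / (cq q) ^ 2)%R.
Proof.
  intro Hq. pose proof (Pq_neq0 q n Hq). pose proof (qpoch_lower q n Hq). pose proof (cq_pos q).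
  rewrite Cmod_div, Cmod_mult, Cmod_cpow by (apply Cmult_neq_0; auto).
  unfold Rdiv. apply Rmult_le_compat_l. apply pow_le, Cmod_ge_0.
  simpl. rewrite Rmult_1_r. apply Rinv_le_contravar. nra.
  apply Rmult_le_compat; lra.
Qed.

Lemma fterm_bound q n : (Cmod q < 1)%R -> (Cmod (f_term q n) <= Cmod q ^ n / (cq q) ^ 2)%R.
Proof.
  intro Hq. eapply Rle_trans; [|apply (inv_form_bound q n Hq)]. unfold f_term. fold (Pq q n).
  pose proof (Pq_neq0 q n Hq).
  rewrite !Cmod_div, !Cmod_cpow by (apply Cmult_neq_0; auto).
  unfold Rdiv. apply Rmult_le_compat_r. left; apply Rinv_0_lt_compat. rewrite Cmod_mult.
  pose proof (Cneq0_mod _ H). nra.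
  apply pow_decr. pose proof (Cmod_ge_0 q); lra. destruct n; simpl; lia.
Qed.

Lemma geom_ex q : (Cmod q < 1)%R -> ex_series (fun n => Cmod q ^ n / (cq q) ^ 2)%R.
Proof.
  intro Hq. apply (ex_series_ext (fun n => (/ (cq q) ^ 2) * Cmod q ^ n)%R). intro; simpl; unfold Rdiv; ring.
  apply (@ex_series_scal_l R_AbsRing R_NormedModule (/ (cq q) ^ 2)%R (fun n => Cmod q ^ n)%R).
  exists (/ (1 - Cmod q))%R. apply is_series_geom. rewrite Rabs_pos_eq; auto. apply Cmod_ge_0.
Qed.

Lemma ex_fterm_lt q : (Cmod q < 1)%R -> ex_series (f_term q).
Proof.
  intro Hq. apply (@ex_series_le C_AbsRing C_CompleteNormedModule _ _ (fun n => fterm_bound q n Hq)).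
  apply geom_ex; auto.
Qed.

Lemma ex_invform q : (Cmod q < 1)%R -> ex_series (fun n => cpow q n / (Pq q n * Pq q n)).
Proof.
  intro Hq. apply (@ex_series_le C_AbsRing C_CompleteNormedModule _ _ (fun n => inv_form_bound q n Hq)).
  apply geom_ex; auto.
Qed.

Lemma fterm_inv_fun (q : C) : q <> 0 -> (Cmod q < 1)%R ->
  f_term (/ q) = fun n => cpow q n / (Pq q n * Pq q n).
Proof.
  intros Hq0 Hq. apply functional_extensionality; intro n. apply fterm_inv; auto. apply Pq_neq0; auto.
Qed.

Lemma part1 (q : C) : Cmod q <> 1%R -> ex_series (f_term q).
Proof.
  intro H. destruct (Rlt_or_le (Cmod q) 1) as [Hlt|Hge].
  - apply ex_fterm_lt; auto.
  - assert (Hgt : (1 < Cmod q)%R) by lra.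
    assert (Hq0 : q <> 0). { intro E; rewrite E, Cmod_0 in Hgt; lra. }
    set (p := / q).
    assert (Hp0 : p <> 0). { unfold p. intro E. apply (f_equal (fun z => z * q)) in E.
      rewrite Cinv_l in E by auto. rewrite Cmult_0_l in E. apply RtoC_neq0 with 1%R; auto. }
    assert (Hp : (Cmod p < 1)%R). { unfold p. rewrite Cmod_inv by auto.
      rewrite <- Rinv_1. apply Rinv_lt_contravar; lra. }
    replace q with (/ p) by (unfold p; field; auto).
    rewrite fterm_inv_fun by auto. apply ex_invform; auto.
Qed.
Open Scope C_scope.

Lemma qpoch_split q n m : Pq q (n + m) = Pq q n * qpoch (- cpow q (S n)) q m.
Proof.
  induction m.
  - rewrite Nat.add_0_r. simpl qpoch. ring.
  - replace (n + S m)%nat with (S (n + m)) by lia. unfold Pq in *. rewrite !qpoch_S, IHm.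
    replace (- cpow q (S n) * cpow q m) with (- q * cpow q (n + m)).
    ring. replace (- cpow q (S n) * cpow q m) with (- (cpow q (S n) * cpow q m)) by ring. rewrite <- cpow_add. change (S n + m)%nat with (S (n + m)). rewrite cpow_S. ring.
Qed.

Definition tn (q : C) n := cexp (- CSeries (sig1 q n)).

Lemma cpow_1 q : cpow q 1 = q.
Proof. rewrite cpow_S, cpow_0. ring. Qed.

Lemma Tn_val q n : (0 < Cmod q < 1)%R -> qpoch_inf (- cpow q (S n)) q = tn q n.
Proof. intro Hq. apply CLim_correct, Tn_lim; auto. Qed.

Lemma chi_lim q : (0 < Cmod q < 1)%R -> CL (Pq q) (tn q 0).
Proof. intro Hq. pose proof (Tn_lim q 0 Hq). rewrite cpow_1 in H. exact H. Qed.

Lemma chi_val q : (0 < Cmod q < 1)%R -> chi q = tn q 0.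
Proof. intro Hq. apply CLim_correct, chi_lim; auto. Qed.

Lemma chi_split q n : (0 < Cmod q < 1)%R -> chi q = Pq q n * tn q n.
Proof.
  intro Hq. rewrite chi_val by auto.
  apply (CL_unique (fun m => Pq q (m + n))).
  apply CL_shift, chi_lim; auto.
  apply (CL_ext (fun m => Pq q n * qpoch (- cpow q (S n)) q m)).
  intro m. rewrite Nat.add_comm, qpoch_split. reflexivity.
  apply CL_mult. apply CL_const. apply Tn_lim; auto.
Qed.

Lemma mtwo_C : RtoC (IZR (Zneg 2)) = - (1 + 1).
Proof. unfold RtoC. apply injective_projections; simpl; ring. Qed.

Ltac toC := match goal with |- ?a = ?b => change (@eq C a b) end.

Theorem theorem2 :
  (forall q : C, Cmod q <> 1%R -> ex_series (f_term q)) /\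
  (forall q : C, (0 < Cmod q < 1)%R ->
     is_series (fun n => cpow q (n * n)%nat / (qpoch (- q) q n * qpoch (- q) q n)) (fser q) /\
     is_series (fun n => cpow q n / (qpoch (- q) q n * qpoch (- q) q n)) (fser (/ q)) /\
     is_series (fun n => qpoch_inf (- cpow q (S n)%nat) q * qpoch_inf (- cpow q (S n)%nat) q
                         * cpow q (n * n)%nat)
               (fser q * (chi q * chi q)) /\
     is_series (fun n => qpoch_inf (- cpow q (S n)%nat) q * qpoch_inf (- cpow q (S n)%nat) q
                         * cpow q n)
               (fser (/ q) * (chi q * chi q)) /\
     (forall n : nat, ex_series (fun s => (cpow q s / RtoC (INR s)) * RtoC (A1 n s))) /\
     (forall n : nat, ex_series (fun s => cpow q s * RtoC (A2 n s))) /\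
     is_series (fun n => cpow q (n * n)%nat *
             cexp (- 2 * CSeries (fun s => (cpow q s / RtoC (INR s)) * RtoC (A1 n s))))
               (fser q * (chi q * chi q)) /\
     is_series (fun n => cpow q (n * n)%nat *
             cexp (- 2 * CSeries (fun s => cpow q s * RtoC (A2 n s))))
               (fser q * (chi q * chi q)) /\
     is_series (fun n => cpow q n *
             cexp (- 2 * CSeries (fun s => cpow q s * RtoC (A2 n s))))
               (fser (/ q) * (chi q * chi q))).
Proof.
  split; [apply part1|].
  intros q Hq.
  assert (Hq1 : (Cmod q < 1)%R) by lra.
  assert (Hq0 : q <> 0). { intro E; rewrite E, Cmod_0 in Hq; lra. }
  assert (F1 : is_series (f_term q) (fser q)) by (apply CSeries_ex, ex_fterm_lt; auto).
  assert (F2 : is_series (fun n => cpow q n / (Pq q n * Pq q n)) (fser (/ q))).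
  { unfold fser. rewrite fterm_inv_fun by auto. apply CSeries_ex, ex_invform; auto. }
  assert (T2 : forall n, qpoch_inf (- cpow q (S n)) q * qpoch_inf (- cpow q (S n)) q
                = chi q * chi q / (Pq q n * Pq q n)).
  { intro n. rewrite Tn_val, (chi_split q n) by auto. field. apply Pq_neq0; auto. }
  assert (E1 : forall n, cexp (- 2 * CSeries (fun s => (cpow q s / RtoC (INR s)) * RtoC (A1 n s)))
                = chi q * chi q / (Pq q n * Pq q n)).
  { intro n. rewrite <- T2, !Tn_val by auto. unfold tn, sig1. rewrite <- cexp_plus.
    f_equal. rewrite mtwo_C. ring. }
  assert (E2 : forall n, cexp (- 2 * CSeries (fun s => cpow q s * RtoC (A2 n s)))
                = chi q * chi q / (Pq q n * Pq q n)).
  { intro n. rewrite <- E1. f_equal. f_equal. f_equal. apply functional_extensionality; intro s.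
    symmetry. apply (sig12 q n s). }
  assert (G1 : is_series (fun n => chi q * chi q * f_term q n) (fser q * (chi q * chi q))).
  { rewrite (Cmult_comm (fser q)). apply is_series_Cscal; auto. }
  assert (G2 : is_series (fun n => chi q * chi q * (cpow q n / (Pq q n * Pq q n))) (fser (/ q) * (chi q * chi q))).
  { rewrite (Cmult_comm (fser (/ q))). apply is_series_Cscal; auto. }
  assert (HP : forall n, Pq q n <> 0) by (intro; apply Pq_neq0; auto).
  split; [exact F1|].
  split; [exact F2|].
  split.
  { eapply is_series_ext; [|exact G1]. intro n. cbv beta. toC. rewrite T2. unfold f_term. fold (Pq q n).
    field. auto. }
  split.
  { eapply is_series_ext; [|exact G2]. intro n. cbv beta. toC. rewrite T2. field. auto. }
  split; [intro n; apply (sig1_ex q n Hq)|].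
  split; [intro n; apply (sig2_ex q n Hq)|].
  split.
  { eapply is_series_ext; [|exact G1]. intro n. cbv beta. toC. rewrite E1. unfold f_term. fold (Pq q n).
    field. auto. }
  split.
  { eapply is_series_ext; [|exact G1]. intro n. cbv beta. toC. rewrite E2. unfold f_term. fold (Pq q n).
    field. auto. }
  { eapply is_series_ext; [|exact G2]. intro n. cbv beta. toC. rewrite E2. field. auto. }
Qed.
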